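(* Let $L\ge1$ and $\alpha\in(\alpha_{L+1},\alpha_L)$. There exist positive constants $c_1,\dots,c_L$ (depending only on $\alpha$ and $L$) such that for all real numbers $d_1,\dots,d_L$ the system $AS(d_1,\dots,d_L)$ has a unique solution $(l_0,\dots,l_{L+2})$, and this solution satisfies $$d_{L+1}=-d_0(L)-\sum_{k=1}^Lc_kd_k,\qquad d_0=d_0(L)-\sum_{k=1}^Lc_{L+1-k}d_k,$$ where $d_0:=-l_1+\alpha l_2$ and $d_{L+1}:=-\alpha l_L+l_{L+1}$.
   Context: Define $\alpha_1:=+\infty$ and, for $L\ge2$, $\alpha_L:=\dfrac{1}{1+2\cos(\frac{2\pi}{L+2})}$. For real $d_1,\dots,d_L$, the system $AS(d_1,\dots,d_L)$ on the unknown $(l_0,\dots,l_{L+2})\in\mathbb{R}^{L+3}$ is: $l_0=l_{L+2}=0$; $d_j=-\alpha l_{j-1}+l_j-l_{j+1}+\alpha l_{j+2}$ for all $j\in\{1,\dots,L\}$; $\sum_{j=1}^{L+1}l_j=1$. The constant $d_0(L)$ is the value of $-l_1+\alpha l_2$ at the (unique) solution of $AS(0,\dots,0)$; explicitly, with $\omega\in(0,\pi)$ defined by $\cos\omega=\frac{1-\alpha}{2\alpha}$, $d_0(L)=-\alpha\sin(\frac{L+3}{2}\omega)\sin(\frac{\omega}{2})/\sum_{i=1}^{L+1}\sin(\frac{L+2-i}{2}\omega)\sin(\frac{i\omega}{2})$, and $d_0(L)>0$. *)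

(* Defs.v *)
From Stdlib Require Import Reals.
Open Scope R_scope.

(* alpha_L := 1/(1+2 cos(2 pi/(L+2))) for L >= 2  (alpha_1 = +infinity is
   handled separately in [alpha_interval]). *)
Definition alphaL (L : nat) : R := 1 / (1 + 2 * cos (2 * PI / INR (L + 2))).

(* alpha in the open interval (alpha_{L+1}, alpha_L), with alpha_1 = +oo. *)
Definition alpha_interval (L : nat) (a : R) : Prop :=
  alphaL (L + 1) < a /\ ((2 <= L)%nat -> a < alphaL L).

Fixpoint sumR (n : nat) (f : nat -> R) : R :=
  match n with
  | O => 0
  | S m => sumR m f + f (S m)
  end.

(* The system AS(d_1,...,d_L) with parameter alpha on the unknown
   (l_0,...,l_{L+2}); only the values l 0, ..., l (L+2) matter. *)
Definition AS (alpha : R) (L : nat) (d : nat -> R) (l : nat -> R) : Prop :=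
  l 0%nat = 0 /\ l (L + 2)%nat = 0 /\
  (forall j : nat, (1 <= j <= L)%nat ->
     d j = - alpha * l (j - 1)%nat + l j - l (j + 1)%nat + alpha * l (j + 2)%nat) /\
  sumR (L + 1) l = 1.

Definition AS_unique (alpha : R) (L : nat) (d : nat -> R) : Prop :=
  (exists l, AS alpha L d l) /\
  (forall l l', AS alpha L d l -> AS alpha L d l' ->
     forall i, (i <= L + 2)%nat -> l i = l' i).

Definition is_d0 (alpha : R) (L : nat) (v : R) : Prop :=
  forall l, AS alpha L (fun _ => 0) l -> v = - l 1%nat + alpha * l 2%nat.

(* Main.v *)
Require Import Defs.
From Stdlib Require Import Reals Lra Lia.
Open Scope R_scope.

Lemma sumR_ext n f g : (forall k, (1 <= k <= n)%nat -> f k = g k) -> sumR n f = sumR n g.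
Proof.
  induction n; intros H; simpl; auto.
  rewrite IHn; [rewrite H; [reflexivity|lia]|]. intros k Hk; apply H; lia.
Qed.

Lemma sumR_scal n K f : sumR n (fun k => K * f k) = K * sumR n f.
Proof. induction n; simpl; [ring|rewrite IHn; ring]. Qed.

Lemma sumR_plus n f g : sumR n (fun k => f k + g k) = sumR n f + sumR n g.
Proof. induction n; simpl; [ring|rewrite IHn; ring]. Qed.

Lemma sumR_minus n f g : sumR n (fun k => f k - g k) = sumR n f - sumR n g.
Proof. induction n; simpl; [ring|rewrite IHn; ring]. Qed.

Lemma sumR_pos n f : (forall k, (1 <= k <= n)%nat -> 0 < f k) -> (1 <= n)%nat -> 0 < sumR n f.
Proof.
  induction n; intros H Hn; [lia|]. simpl.
  destruct n. { simpl. specialize (H 1%nat). assert (0 < f 1%nat) by (apply H; lia). lra. }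
  assert (0 < sumR (S n) f) by (apply IHn; [intros; apply H; lia|lia]).
  assert (0 < f (S (S n))) by (apply H; lia). lra.
Qed.

Lemma sumR_shift n f : sumR (S n) f = f 1%nat + sumR n (fun k => f (S k)).
Proof.
  induction n; simpl; [ring|]. simpl in IHn. rewrite IHn. ring.
Qed.

Lemma sumR_refl n f : sumR n (fun k => f (n + 1 - k)%nat) = sumR n f.
Proof.
  revert f; induction n; intros f; cbn [sumR]; [reflexivity|].
  replace (S n + 1 - S n)%nat with 1%nat by lia.
  rewrite (sumR_ext n _ (fun k => f (S (n + 1 - k)%nat))).
  2:{ intros k Hk. f_equal. lia. }
  rewrite (IHn (fun i => f (S i))). change (sumR n f + f (S n)) with (sumR (S n) f). rewrite (sumR_shift n f). ring.
Qed.

Definition Eop (a : R) (l : nat -> R) (k : nat) : R :=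
  - a * l (k - 1)%nat + l k - l (k + 1)%nat + a * l (k + 2)%nat.

Lemma SBP (a : R) (b l : nat -> R) (n : nat) : b 0%nat = 0 ->
  sumR n (fun k => b k * Eop a l k) =
  sumR n (fun j => l j * (a * b (j - 2)%nat - b (j - 1)%nat + b j - a * b (j + 1)%nat))
  + (- a * b 1%nat * l 0%nat + a * b (n + 1)%nat * l n + l (n + 1)%nat * (a * b (n - 1)%nat - b n)
     + a * b n * l (n + 2)%nat).
Proof.
  intros Hb0. induction n.
  - simpl. rewrite Hb0. ring.
  - change (sumR (S n) (fun k => b k * Eop a l k)) with
      (sumR n (fun k => b k * Eop a l k) + b (S n) * Eop a l (S n)).
    rewrite IHn. simpl sumR at 2. unfold Eop.
    replace (S n - 2)%nat with (n - 1)%nat by lia.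
    replace (S n - 1)%nat with n by lia.
    replace (S n + 1)%nat with (n + 2)%nat by lia.
    replace (S n + 2)%nat with (n + 3)%nat by lia.
    replace (n + 1)%nat with (S n) by lia.
    replace (n + 2 + 1)%nat with (n + 3)%nat by lia.
    replace (n - 0)%nat with n by lia. replace (S (S n)) with (n + 2)%nat by lia. ring.
Qed.

Lemma ps a b : sin a * sin b = (cos (a - b) - cos (a + b)) / 2.
Proof. rewrite cos_minus, cos_plus. field. Qed.

Lemma sin3 w : sin (3 * w) = sin w * (1 + 2 * cos (2 * w)).
Proof.
  replace (3 * w) with (2 * w + w) by ring. rewrite sin_plus.
  rewrite sin_2a, cos_2a. pose proof (sin2_cos2 w). unfold Rsqr in H.
  assert (sin w * (sin w * sin w + cos w * cos w) = sin w * 1) by (rewrite H; ring). lra.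
Qed.

Lemma Gcos a w p : a * sin (3 * w) = sin w ->
  a * cos (p - 3 * w) - cos (p - w) + cos (p + w) - a * cos (p + 3 * w) = 0.
Proof.
  intros H. rewrite !cos_minus, !cos_plus.
  replace (a * (cos p * cos (3 * w) + sin p * sin (3 * w)) - (cos p * cos w + sin p * sin w) +
   (cos p * cos w - sin p * sin w) - a * (cos p * cos (3 * w) - sin p * sin (3 * w)))
  with (2 * sin p * (a * sin (3 * w) - sin w)) by ring.
  rewrite H. ring.
Qed.

Lemma Gsin a w p : a * sin (3 * w) = sin w ->
  a * sin (p - 3 * w) - sin (p - w) + sin (p + w) - a * sin (p + 3 * w) = 0.
Proof.
  intros H. rewrite !sin_minus, !sin_plus.
  replace (a * (sin p * cos (3 * w) - cos p * sin (3 * w)) - (sin p * cos w - cos p * sin w) +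
   (sin p * cos w + cos p * sin w) - a * (sin p * cos (3 * w) + cos p * sin (3 * w)))
  with (- 2 * cos p * (a * sin (3 * w) - sin w)) by ring.
  rewrite H. ring.
Qed.

Definition ff (w x : R) := sin (x * w) * sin ((x + 1) * w).
Definition gg (w x : R) := (2 * x + 1) * sin w - sin ((2 * x + 1) * w).
Definition uu (w nN x : R) := sin (x * w) * sin ((nN - x) * w).

Lemma ff_ps w x : ff w x = (cos w - cos ((2 * x + 1) * w)) / 2.
Proof.
  unfold ff. rewrite ps. replace (x * w - (x + 1) * w) with (- w) by ring.
  rewrite cos_neg. replace (x * w + (x + 1) * w) with ((2 * x + 1) * w) by ring. reflexivity.
Qed.

Lemma uu_ps w nN x : uu w nN x = (cos ((2 * x - nN) * w) - cos (nN * w)) / 2.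
Proof.
  unfold uu. rewrite ps. replace (x * w - (nN - x) * w) with ((2 * x - nN) * w) by ring.
  replace (x * w + (nN - x) * w) with (nN * w) by ring. reflexivity.
Qed.

Lemma ff_adj a w x : a * sin (3 * w) = sin w ->
  a * ff w (x - 2) - ff w (x - 1) + ff w x - a * ff w (x + 1) = 0.
Proof.
  intros H. rewrite !ff_ps.
  replace ((2 * (x - 2) + 1) * w) with (2 * x * w - 3 * w) by ring.
  replace ((2 * (x - 1) + 1) * w) with (2 * x * w - w) by ring.
  replace ((2 * x + 1) * w) with (2 * x * w + w) by ring.
  replace ((2 * (x + 1) + 1) * w) with (2 * x * w + 3 * w) by ring.
  pose proof (Gcos a w (2 * x * w) H). lra.
Qed.

Lemma ff_fwd a w x : a * sin (3 * w) = sin w ->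
  - a * ff w (x - 1) + ff w x - ff w (x + 1) + a * ff w (x + 2) = 0.
Proof.
  intros H. pose proof (ff_adj a w (x + 1) H).
  replace (x + 1 - 2) with (x - 1) in H0 by ring.
  replace (x + 1 - 1) with x in H0 by ring.
  replace (x + 1 + 1) with (x + 2) in H0 by ring. lra.
Qed.

Lemma gg_adj a w x : a * sin (3 * w) = sin w ->
  a * gg w (x - 2) - gg w (x - 1) + gg w x - a * gg w (x + 1) = 2 * sin w * (1 - 3 * a).
Proof.
  intros H. unfold gg.
  replace ((2 * (x - 2) + 1) * w) with (2 * x * w - 3 * w) by ring.
  replace ((2 * (x - 1) + 1) * w) with (2 * x * w - w) by ring.
  replace ((2 * x + 1) * w) with (2 * x * w + w) by ring.
  replace ((2 * (x + 1) + 1) * w) with (2 * x * w + 3 * w) by ring.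
  pose proof (Gsin a w (2 * x * w) H). lra.
Qed.

Lemma uu_fwd a w nN x : a * sin (3 * w) = sin w ->
  - a * uu w nN (x - 1) + uu w nN x - uu w nN (x + 1) + a * uu w nN (x + 2) = 0.
Proof.
  intros H. rewrite !uu_ps.
  set (p := (2 * x + 1 - nN) * w).
  replace ((2 * (x - 1) - nN) * w) with (p - 3 * w) by (unfold p; ring).
  replace ((2 * x - nN) * w) with (p - w) by (unfold p; ring).
  replace ((2 * (x + 1) - nN) * w) with (p + w) by (unfold p; ring).
  replace ((2 * (x + 2) - nN) * w) with (p + 3 * w) by (unfold p; ring).
  pose proof (Gcos a w p H). lra.
Qed.

Lemma det_id w nN :
  sin ((nN - 1) * w) * sin (3 * w) - sin ((nN - 2) * w) * sin (2 * w) = sin w * sin ((nN + 1) * w).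
Proof.
  rewrite !ps.
  replace ((nN - 1) * w - 3 * w) with ((nN - 2) * w - 2 * w) by ring.
  replace (w - (nN + 1) * w) with (- (nN * w)) by ring. rewrite cos_neg.
  replace ((nN - 1) * w + 3 * w) with (w + (nN + 1) * w) by ring.
  replace ((nN - 2) * w + 2 * w) with (nN * w) by ring. field.
Qed.

Lemma sin_mult_bound w n : 0 < sin w ->
  Rabs (sin (INR n * w)) <= INR n * sin w.
Proof.
  intros Hs. induction n.
  - simpl. rewrite Rmult_0_l, sin_0, Rabs_R0. lra.
  - rewrite S_INR. replace ((INR n + 1) * w) with (INR n * w + w) by ring.
    rewrite sin_plus.
    pose proof (COS_bound (INR n * w)). pose proof (COS_bound w).
    pose proof (Rabs_triang (sin (INR n * w) * cos w) (cos (INR n * w) * sin w)).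
    rewrite !Rabs_mult in H1.
    assert (Rabs (cos w) <= 1) by (apply Rabs_le; lra).
    assert (Rabs (cos (INR n * w)) <= 1) by (apply Rabs_le; lra).
    rewrite (Rabs_right (sin w)) in H1 by lra.
    pose proof (Rabs_pos (sin (INR n * w))). pose proof (Rabs_pos (cos w)).
    nra.
Qed.

Lemma sin_mult_strict w n : 0 < sin w -> (2 <= n)%nat ->
  sin (INR n * w) < INR n * sin w.
Proof.
  intros Hs Hn. destruct n as [|n]; [lia|].
  rewrite S_INR. replace ((INR n + 1) * w) with (INR n * w + w) by ring.
  rewrite sin_plus.
  pose proof (sin_mult_bound w n Hs).
  assert (1 <= INR n) by (apply (le_INR 1); lia).
  pose proof (sin2_cos2 w). unfold Rsqr in H1.
  assert (Rabs (cos w) < 1).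
  { apply Rabs_def1; nra. }
  pose proof (COS_bound (INR n * w)).
  assert (sin (INR n * w) * cos w <= Rabs (sin (INR n * w)) * Rabs (cos w)).
  { rewrite <- Rabs_mult. apply Rle_abs. }
  pose proof (Rabs_pos (sin (INR n * w))). pose proof (Rabs_pos (cos w)).
  assert (Rabs (sin (INR n * w)) * Rabs (cos w) < INR n * sin w).
  { destruct (Req_dec (Rabs (sin (INR n * w))) 0) as [E|E].
    - rewrite E. nra.
    - nra. }
  nra.
Qed.

Lemma angle_setup (L : nat) (alpha : R) :
  (1 <= L)%nat -> alpha_interval L alpha ->
  exists w, 0 < alpha /\ 0 < w /\ w * INR (L + 2) < PI /\ PI < w * (INR (L + 2) + 1)
    /\ alpha * sin (3 * w) = sin w.
Proof.
  intros HL [Hlo Hhi].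
  pose proof PI_RGT_0 as Hpi.
  assert (HN3 : 4 <= INR (L + 3)) by (replace 4 with (INR 4) by (simpl; ring); apply le_INR; lia).
  set (t1 := 2 * PI / INR (L + 3)).
  assert (Ht1 : 0 < t1 <= PI / 2).
  { unfold t1; split.
    - apply Rdiv_lt_0_compat; lra.
    - apply (Rmult_le_reg_r (INR (L + 3))); [lra|]. unfold Rdiv. field_simplify; [|lra]. nra. }
  unfold alphaL in Hlo. replace (L + 1 + 2)%nat with (L + 3)%nat in Hlo by lia.
  fold t1 in Hlo.
  assert (Hc1 : 0 <= cos t1) by (apply cos_ge_0; lra).
  assert (Hc1' : cos t1 < 1) by (rewrite <- cos_0; apply cos_decreasing_1; lra).
  assert (Hp : alpha * (1 + 2 * cos t1) > 1).
  { apply (Rmult_lt_compat_r (1 + 2 * cos t1)) in Hlo; [|lra].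
    unfold Rdiv in Hlo. rewrite Rmult_1_l, Rinv_l in Hlo; lra. }
  assert (Ha0 : 0 < alpha) by nra.
  assert (Ha3 : 1 / 3 < alpha) by nra.
  set (x0 := (1 - alpha) / (2 * alpha)).
  assert (Hx0 : -1 < x0 < 1).
  { unfold x0; split.
    - apply (Rmult_lt_reg_r (2 * alpha)); [lra|]. unfold Rdiv. field_simplify; lra.
    - apply (Rmult_lt_reg_r (2 * alpha)); [lra|]. unfold Rdiv. field_simplify; lra. }
  assert (Hx0h : -1/2 < x0).
  { unfold x0. apply (Rmult_lt_reg_r (2 * alpha)); [lra|]. unfold Rdiv. field_simplify; lra. }
  set (om := acos x0).
  pose proof (acos_bound_lt x0 Hx0) as Hom. fold om in Hom.
  assert (Hcom : cos om = x0) by (apply cos_acos; lra).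
  assert (Hlow : t1 < om).
  { apply (cos_decreasing_0 om t1); try lra. rewrite Hcom.
    unfold x0. apply (Rmult_lt_reg_r (2 * alpha)); [lra|]. unfold Rdiv. field_simplify; lra. }
  assert (Hup : om < 2 * PI / INR (L + 2)).
  { destruct (Nat.le_gt_cases 2 L) as [H2|H2].
    - specialize (Hhi H2). unfold alphaL in Hhi. set (t0 := 2 * PI / INR (L + 2)) in *.
      assert (HN4 : 4 <= INR (L + 2)) by (replace 4 with (INR 4) by (simpl; ring); apply le_INR; lia).
      assert (Ht0 : 0 < t0 <= PI / 2).
      { unfold t0; split.
        - apply Rdiv_lt_0_compat; lra.
        - apply (Rmult_le_reg_r (INR (L + 2))); [lra|]. unfold Rdiv. field_simplify; [|lra]. nra. }
      assert (Hc0 : 0 <= cos t0) by (apply cos_ge_0; lra).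
      assert (Hq : alpha * (1 + 2 * cos t0) < 1).
      { apply (Rmult_lt_compat_r (1 + 2 * cos t0)) in Hhi; [|lra].
        unfold Rdiv in Hhi. rewrite Rmult_1_l, Rinv_l in Hhi; lra. }
      apply (cos_decreasing_0 t0 om); try lra. rewrite Hcom.
      unfold x0. apply (Rmult_lt_reg_r (2 * alpha)); [lra|]. unfold Rdiv. field_simplify; lra.
    - assert (L = 1%nat) by lia. subst L. simpl (INR _).
      replace (2 * PI / (1 + 1 + 1)) with (2 * (PI / 3)) by field.
      apply (cos_decreasing_0 (2 * (PI / 3)) om); try lra. rewrite Hcom, cos_2PI3. lra. }
  exists (om / 2). split; [lra|]. split; [lra|].
  assert (HN : 0 < INR (L + 2)) by (apply lt_0_INR; lia).
  split; [|split].
  - apply (Rmult_lt_compat_r (INR (L + 2))) in Hup; [|lra].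
    unfold Rdiv in Hup. rewrite Rmult_assoc, Rinv_l in Hup; lra.
  - assert (E : INR (L + 3) = INR (L + 2) + 1) by (rewrite !plus_INR; simpl; ring).
    unfold t1 in Hlow. rewrite E in Hlow.
    apply (Rmult_lt_compat_r (INR (L + 2) + 1)) in Hlow; [|lra].
    unfold Rdiv in Hlow. rewrite Rmult_assoc, Rinv_l in Hlow; lra.
  - rewrite sin3. replace (2 * (om / 2)) with om by field. rewrite Hcom.
    unfold x0. field. lra.
Qed.

Fixpoint fwd (a : R) (d : nat -> R) (n : nat) : R :=
  match n with
  | S n1 => match n1 with
            | S n2 => match n2 with
                      | S m => (d (S m) + a * fwd a d m - fwd a d n2 + fwd a d n1) / a
                      | O => 0
                      end
            | O => 0
            end
  | O => 0
  end.

Lemma fwd_eq a d j : a <> 0 -> (1 <= j)%nat -> Eop a (fwd a d) j = d j.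
Proof.
  intros Ha Hj. destruct j as [|m]; [lia|]. unfold Eop.
  replace (S m - 1)%nat with m by lia.
  replace (S m + 1)%nat with (S (S m)) by lia.
  replace (S m + 2)%nat with (S (S (S m))) by lia.
  cbn [fwd]. field. auto.
Qed.

Lemma INR_m1 j : (1 <= j)%nat -> INR (j - 1) = INR j - 1.
Proof. intros; rewrite minus_INR by lia; simpl; ring. Qed.
Lemma INR_p1 j : INR (j + 1) = INR j + 1.
Proof. rewrite plus_INR; simpl; ring. Qed.
Lemma INR_p2 j : INR (j + 2) = INR j + 2.
Proof. rewrite plus_INR; simpl; ring. Qed.

Lemma Eop_fun a h j : (1 <= j)%nat ->
  (forall x, - a * h (x - 1) + h x - h (x + 1) + a * h (x + 2) = 0) ->
  Eop a (fun i => h (INR i)) j = 0.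
Proof.
  intros Hj H. unfold Eop. rewrite INR_m1, INR_p1, INR_p2 by auto. apply H.
Qed.

Lemma Eop_lin a p x y R0 T j :
  Eop a (fun i => p i + R0 * x i + T * y i) j = Eop a p j + R0 * Eop a x j + T * Eop a y j.
Proof. unfold Eop; ring. Qed.

Lemma agree a L (m z : nat -> R) : a <> 0 ->
  m 0%nat = z 0%nat -> m 1%nat = z 1%nat -> m 2%nat = z 2%nat ->
  (forall j, (1 <= j <= L)%nat -> Eop a m j = Eop a z j) ->
  forall i, (i <= L + 2)%nat -> m i = z i.
Proof.
  intros Ha H0 H1 H2 HE.
  assert (forall n i, (i <= n)%nat -> (i <= L + 2)%nat -> m i = z i).
  { induction n; intros i Hi HiL.
    - replace i with 0%nat by lia. auto.
    - destruct (Nat.le_gt_cases i n) as [Hin|Hin]; [apply IHn; lia|].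
      replace i with (S n) in * by lia.
      destruct (Nat.le_gt_cases (S n) 2) as [Hs|Hs].
      + destruct n as [|[|n']]; auto; lia.
      + specialize (HE (n - 1)%nat ltac:(lia)). unfold Eop in HE.
        replace (n - 1 + 2)%nat with (S n) in HE by lia.
        replace (n - 1 + 1)%nat with n in HE by lia.
        rewrite (IHn (n - 1 - 1)%nat), (IHn (n - 1)%nat), (IHn n) in HE by lia.
        apply (Rmult_eq_reg_l a); auto. lra. }
  intros i Hi. apply (H i i); lia.
Qed.

Lemma sumR_zero n : sumR n (fun _ => 0) = 0.
Proof. induction n; simpl; [ring|rewrite IHn; ring]. Qed.

Theorem mainTheorem9 (L : nat) (alpha : R) :
  (1 <= L)%nat -> alpha_interval L alpha ->
  exists c : nat -> R,
    (forall k, (1 <= k <= L)%nat -> 0 < c k) /\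
    forall d : nat -> R,
      AS_unique alpha L d /\
      forall l : nat -> R, AS alpha L d l ->
        forall d0L : R, is_d0 alpha L d0L ->
          (- alpha * l L + l (L + 1)%nat
             = - d0L - sumR L (fun k => c k * d k)) /\
          (- l 1%nat + alpha * l 2%nat
             = d0L - sumR L (fun k => c (L + 1 - k)%nat * d k)).
Proof.
  intros HL Hint.
  destruct (angle_setup L alpha HL Hint) as [w [Ha [Hw [HwN [HwN1 H3]]]]].
  pose proof PI_RGT_0 as Hpi.
  set (nN := INR (L + 2)) in *.
  assert (HnN3 : 3 <= nN) by (unfold nN; replace 3 with (INR 3) by (simpl; ring); apply le_INR; lia).
  assert (Han : alpha <> 0) by lra.
  assert (spos : forall y, 0 < y -> y <= nN -> 0 < sin (y * w)).
  { intros y Hy1 Hy2. apply sin_gt_0; nra. }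
  assert (sneg : sin ((nN + 1) * w) < 0).
  { apply sin_lt_0; nra. }
  assert (s1 : 0 < sin w) by (rewrite <- (Rmult_1_l w); apply spos; lra).
  set (f := ff w). set (g := gg w). set (u := uu w nN).
  set (fN := f nN).
  assert (HfN : fN < 0).
  { unfold fN, f, ff. pose proof (spos nN ltac:(lra) ltac:(lra)). nra. }
  assert (gpos : forall k, (1 <= k)%nat -> 0 < g (INR k)).
  { intros k Hk. unfold g, gg.
    replace (2 * INR k + 1) with (INR (2 * k + 1)) by (rewrite plus_INR, mult_INR; simpl; ring).
    pose proof (sin_mult_strict w (2 * k + 1) s1 ltac:(lia)). lra. }
  assert (fpos : forall y, 0 < y -> y <= nN - 1 -> 0 < f y).
  { intros y Hy1 Hy2. unfold f, ff.
    pose proof (spos y Hy1 ltac:(lra)). pose proof (spos (y + 1) ltac:(lra) ltac:(lra)). nra. }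
  assert (EnN1 : nN - 1 = INR (L + 1)) by (unfold nN; rewrite !plus_INR; simpl; ring).
  assert (HgN : 0 < g nN) by (apply gpos; lia).
  assert (HgN1 : 0 < g (nN - 1)) by (rewrite EnN1; apply gpos; lia).
  assert (HfN1 : 0 < f (nN - 1)) by (apply fpos; lra).
  set (Dl := fN * g (nN - 1) - g nN * f (nN - 1)).
  assert (HDl : Dl < 0) by (unfold Dl; nra).
  set (C := fun x => (fN * g x - g nN * f x) / Dl).
  set (K := fN * (2 * sin w * (1 - 3 * alpha)) / Dl).
  assert (Cadj : forall x, alpha * C (x - 2) - C (x - 1) + C x - alpha * C (x + 1) = K).
  { intros x. unfold C, K. pose proof (ff_adj alpha w x H3). pose proof (gg_adj alpha w x H3).
    fold f g in H, H0.
    apply (Rmult_eq_reg_r Dl); [|lra]. field_simplify; [|lra|lra].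
    transitivity (fN * (alpha * g (x - 2) - g (x - 1) + g x - alpha * g (x + 1))
                  - g nN * (alpha * f (x - 2) - f (x - 1) + f x - alpha * f (x + 1))); [ring|].
    rewrite H, H0. ring. }
  assert (f0 : f 0 = 0) by (unfold f, ff; rewrite Rmult_0_l, sin_0; ring).
  assert (fm1 : f (-1) = 0) by (unfold f, ff; replace ((-1 + 1) * w) with 0 by ring; rewrite sin_0; ring).
  assert (g0 : g 0 = 0) by (unfold g, gg; replace ((2 * 0 + 1) * w) with w by ring; ring).
  assert (gm1 : g (-1) = 0) by (unfold g, gg; replace ((2 * -1 + 1) * w) with (- w) by ring; rewrite sin_neg; ring).
  assert (C0 : C 0 = 0) by (unfold C; rewrite f0, g0; field; lra).
  assert (Cm1 : C (-1) = 0) by (unfold C; rewrite fm1, gm1; field; lra).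
  assert (CN1 : C (nN - 1) = 1) by (unfold C; fold Dl; field; lra).
  assert (CN : C nN = 0) by (unfold C; unfold fN; field; lra).
  set (c := fun k : nat => C (INR k)).
  assert (c0 : c 0%nat = 0) by (unfold c; simpl; exact C0).
  assert (Aj : forall j, (1 <= j <= L + 1)%nat ->
     alpha * c (j - 2)%nat - c (j - 1)%nat + c j - alpha * c (j + 1)%nat = K).
  { intros j Hj. rewrite <- (Cadj (INR j)). unfold c.
    rewrite INR_m1, INR_p1 by lia. f_equal. f_equal. f_equal.
    destruct (Nat.le_gt_cases 2 j) as [H2|H2].
    - rewrite minus_INR by lia. simpl (INR 2). f_equal; ring.
    - replace j with 1%nat by lia. simpl. replace (1 - 2) with (-1) by ring. rewrite Cm1, C0. reflexivity. }
  assert (first : forall d l, AS alpha L d l ->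
            - alpha * l L + l (L + 1)%nat = K - sumR L (fun k => c k * d k)).
  { intros d l [Hl0 [HlN [Heq Hsum]]].
    rewrite (sumR_ext L _ (fun k => c k * Eop alpha l k)).
    2:{ intros k Hk. rewrite Heq by lia. reflexivity. }
    rewrite (SBP alpha c l L c0).
    rewrite (sumR_ext L _ (fun j => K * l j)).
    2:{ intros j Hj. rewrite Aj by lia. ring. }
    rewrite sumR_scal.
    assert (HcL1 : c (L + 1)%nat = 1) by (unfold c; rewrite <- EnN1; exact CN1).
    assert (HcL2 : c (L + 2)%nat = 0) by (unfold c; exact CN).
    pose proof (Aj (L + 1)%nat ltac:(lia)) as AL.
    replace (L + 1 - 2)%nat with (L - 1)%nat in AL by lia.
    replace (L + 1 - 1)%nat with L in AL by lia.
    replace (L + 1 + 1)%nat with (L + 2)%nat in AL by lia.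
    rewrite HcL1, HcL2 in AL. rewrite HcL1, Hl0, HlN.
    replace (L + 1)%nat with (S L) in Hsum by lia. cbn [sumR] in Hsum.
    replace (L + 1)%nat with (S L) by lia.
    replace (sumR L l) with (1 - l (S L)) by lra.
    replace (alpha * c (L - 1)%nat - c L) with (K - 1) by lra. ring. }
  (* second identity via reflection *)
  assert (second : forall d l, AS alpha L d l ->
            - l 1%nat + alpha * l 2%nat = - K - sumR L (fun k => c (L + 1 - k)%nat * d k)).
  { intros d l Hl. pose proof Hl as [Hl0 [HlN [Heq Hsum]]].
    set (m := fun j => l (L + 2 - j)%nat).
    assert (Hm : AS alpha L (fun j => - d (L + 1 - j)%nat) m).
    { unfold m; split; [|split; [|split]].
      - replace (L + 2 - 0)%nat with (L + 2)%nat by lia. exact HlN.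
      - replace (L + 2 - (L + 2))%nat with 0%nat by lia. exact Hl0.
      - intros j Hj. rewrite Heq by lia.
        replace (L + 1 - j - 1)%nat with (L + 2 - (j + 2))%nat by lia.
        replace (L + 1 - j + 1)%nat with (L + 2 - j)%nat by lia.
        replace (L + 1 - j + 2)%nat with (L + 2 - (j - 1))%nat by lia.
        replace (L + 1 - j)%nat with (L + 2 - (j + 1))%nat by lia. ring.
      - rewrite <- Hsum. rewrite <- (sumR_refl (L + 1) l).
        apply sumR_ext. intros k Hk. f_equal. lia. }
    pose proof (first _ _ Hm) as F. unfold m in F.
    replace (L + 2 - L)%nat with 2%nat in F by lia.
    replace (L + 2 - (L + 1))%nat with 1%nat in F by lia.
    rewrite (sumR_ext L _ (fun k => - (c k * d (L + 1 - k)%nat))) in F by (intros; ring).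
    rewrite <- (sumR_refl L (fun k => c (L + 1 - k)%nat * d k)).
    rewrite (sumR_ext L (fun k => c (L + 1 - (L + 1 - k))%nat * d (L + 1 - k)%nat)
               (fun k => c k * d (L + 1 - k)%nat)).
    2:{ intros k Hk. replace (L + 1 - (L + 1 - k))%nat with k by lia. reflexivity. }
    rewrite (sumR_ext L _ (fun k => (-1) * (c k * d (L + 1 - k)%nat))) in F by (intros; ring).
    rewrite sumR_scal in F. lra. }
  assert (cpos : forall k, (1 <= k <= L)%nat -> 0 < c k).
  { intros k Hk. unfold c, C.
    assert (1 <= INR k) by (apply (le_INR 1); lia).
    assert (INR k <= nN - 1) by (rewrite EnN1; apply le_INR; lia).
    pose proof (gpos k ltac:(lia)). pose proof (fpos (INR k) ltac:(lra) ltac:(lra)).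
    assert (Hn : fN * g (INR k) - g nN * f (INR k) < 0) by nra.
    replace ((fN * g (INR k) - g nN * f (INR k)) / Dl)
      with (- (fN * g (INR k) - g nN * f (INR k)) * / (- Dl)) by (field; lra).
    apply Rmult_lt_0_compat; [lra|apply Rinv_0_lt_compat; lra]. }
  assert (u0 : u (INR 0) = 0) by (unfold u, uu; simpl; rewrite Rmult_0_l, sin_0; ring).
  assert (uN : u nN = 0) by (unfold u, uu; replace ((nN - nN) * w) with 0 by ring; rewrite sin_0; ring).
  assert (ffw : forall x, - alpha * f (x - 1) + f x - f (x + 1) + alpha * f (x + 2) = 0)
    by (intros; apply ff_fwd; auto).
  assert (uuw : forall x, - alpha * u (x - 1) + u x - u (x + 1) + alpha * u (x + 2) = 0)
    by (intros; apply uu_fwd; auto).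
  set (SU := sumR (L + 1) (fun j => u (INR j))).
  assert (HSU : 0 < SU).
  { apply sumR_pos; [|lia]. intros k Hk. unfold u, uu.
    assert (1 <= INR k) by (apply (le_INR 1); lia).
    assert (INR k <= nN - 1) by (rewrite EnN1; apply le_INR; lia).
    pose proof (spos (INR k) ltac:(lra) ltac:(lra)).
    pose proof (spos (nN - INR k) ltac:(lra) ltac:(lra)). nra. }
  assert (Hf0 : f (INR 0) = 0) by (simpl; exact f0).
  assert (exist : forall d, exists l, AS alpha L d l).
  { intros d. set (p := fwd alpha d).
    set (R0 := - p (L + 2)%nat / fN).
    set (q := fun j => p j + R0 * f (INR j)).
    set (T := (1 - sumR (L + 1) q) / SU).
    exists (fun j => p j + R0 * f (INR j) + T * u (INR j)).
    split; [|split; [|split]].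
    - unfold p. rewrite Hf0, u0. simpl. ring.
    - fold nN. rewrite uN. unfold R0. fold fN. field. lra.
    - intros j Hj. symmetry.
      change (Eop alpha (fun i => p i + R0 * f (INR i) + T * u (INR i)) j = d j).
      rewrite (Eop_lin alpha p (fun i => f (INR i)) (fun i => u (INR i)) R0 T j).
      unfold p; rewrite fwd_eq by (auto; lia). rewrite !Eop_fun by (auto; lia). ring.
    - rewrite sumR_plus, sumR_scal. fold SU. unfold T, q. field. lra. }
  assert (uniq : forall d l l', AS alpha L d l -> AS alpha L d l' ->
            forall i, (i <= L + 2)%nat -> l i = l' i).
  { intros d l l' [Hl0 [HlN [Heq Hsum]]] [Hl0' [HlN' [Heq' Hsum']]].
    set (m := fun j => l j - l' j).
    set (det := u (INR 1) * f (INR 2) - u (INR 2) * f (INR 1)).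
    assert (Hdet : det <> 0).
    { unfold det, u, f, uu, ff. simpl (INR 1). simpl (INR 2).
      replace ((1 + 1 + 1) * w) with (3 * w) by ring.
      replace ((1 + 1) * w) with (2 * w) by ring.
      replace ((1 + 1) * w) with (2 * w) by ring.
      replace ((nN - (1 + 1)) * w) with ((nN - 2) * w) by ring.
      rewrite Rmult_1_l.
      replace (sin w * sin ((nN - 1) * w) * (sin (2 * w) * sin (3 * w)) -
               sin (2 * w) * sin ((nN - 2) * w) * (sin w * sin (2 * w)))
        with (sin w * sin (2 * w) * (sin ((nN - 1) * w) * sin (3 * w) - sin ((nN - 2) * w) * sin (2 * w)))
        by ring.
      rewrite det_id.
      pose proof (spos 2 ltac:(lra) ltac:(lra)).
      assert (0 < sin w * sin (2 * w)) by nra.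
      assert (sin w * sin ((nN + 1) * w) < 0) by nra. nra. }
    set (T := (m 1%nat * f (INR 2) - m 2%nat * f (INR 1)) / det).
    set (R := (u (INR 1) * m 2%nat - u (INR 2) * m 1%nat) / det).
    set (z := fun j => 0 + R * f (INR j) + T * u (INR j)).
    assert (Hmz : forall i, (i <= L + 2)%nat -> m i = z i).
    { apply (agree alpha L); auto.
      - unfold m, z. rewrite Hl0, Hl0', Hf0, u0. ring.
      - unfold z, T, R. unfold det in *. field. auto.
      - unfold z, T, R. unfold det in *. field. auto.
      - intros j Hj. unfold z. rewrite (Eop_lin alpha (fun _ => 0) (fun i => f (INR i)) (fun i => u (INR i)) R T j).
        rewrite !Eop_fun by (auto; lia). unfold m, Eop. pose proof (Heq j Hj). pose proof (Heq' j Hj). lra. }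
    assert (HR : R = 0).
    { pose proof (Hmz (L + 2)%nat ltac:(lia)) as E. unfold m, z in E.
      rewrite HlN, HlN' in E. fold nN in E. rewrite uN in E. fold fN in E.
      apply (Rmult_eq_reg_r fN); lra. }
    assert (HT : T = 0).
    { assert (E : sumR (L + 1) m = sumR (L + 1) z) by (apply sumR_ext; intros; apply Hmz; lia).
      unfold m in E. rewrite sumR_minus, Hsum, Hsum' in E.
      unfold z in E. rewrite sumR_plus, sumR_plus, sumR_scal, sumR_scal, sumR_zero in E.
      fold SU in E. rewrite HR in E. apply (Rmult_eq_reg_r SU); lra. }
    intros i Hi. pose proof (Hmz i Hi) as E. unfold m, z in E. rewrite HR, HT in E. lra. }
  exists c. split; [exact cpos|]. intros d. split.
  - split; [apply exist|]. intros l l' Hl Hl'. apply (uniq d l l' Hl Hl').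
  - intros l Hl d0L Hd0.
    destruct (exist (fun _ => 0)) as [l0 Hl0].
    pose proof (second _ _ Hl0) as S0. rewrite (sumR_ext L _ (fun _ => 0)) in S0 by (intros; ring).
    rewrite sumR_zero in S0. rewrite <- (Hd0 l0 Hl0) in S0.
    split.
    + rewrite (first d l Hl). lra.
    + rewrite (second d l Hl). lra.
Qed.
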